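(* Let $G$ be a connected graph and let $S \subseteq V(G)$ with $|S| = k \ge 1$. Then there exists a connected induced subgraph $H$ of $G$ with $S \subseteq V(H)$ and a partition $V(H) = A \cup B$ into two disjoint sets such that: (1) every connected component of $G[A]$ and every connected component of $G[B]$ has at most $\lceil k/2 \rceil$ vertices; (2) the spanning subgraph of $H$ with vertex set $V(H)$ whose edges are exactly the edges of $H$ with one endpoint in $A$ and the other in $B$ is connected; (3) every vertex $v \in V(G)\setminus V(H)$ that is adjacent in $G$ to at least one vertex of $V(H)$ has a neighbor $a\in A$ and a neighbor $b \in B$.
   Context: All graphs are finite and simple. $G[X]$ denotes the subgraph of $G$ induced by the vertex set $X$. *)

(* Defs.v *)
From mathcomp Require Import all_boot.
Set Implicit Arguments. Unset Strict Implicit. Unset Printing Implicit Defensive.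

Definition simple_graph (T : finType) (e : rel T) : Prop :=
  symmetric e /\ irreflexive e.

Definition induced (T : finType) (e : rel T) (X : {set T}) : rel T :=
  [rel x y | [&& x \in X, y \in X & e x y]].

(* The graph (X, r) is connected: any two vertices of X are joined by an
   r-path (r only relates vertices of X in our uses). *)
Definition connected_on (T : finType) (r : rel T) (X : {set T}) : Prop :=
  forall x y, x \in X -> y \in X -> connect r x y.

Definition graph_connected (T : finType) (e : rel T) : Prop :=
  connected_on e [set: T].

Definition comp_of (T : finType) (e : rel T) (X : {set T}) (x : T) : {set T} :=
  [set y in X | connect (induced e X) x y].

Definition cross (T : finType) (e : rel T) (A B : {set T}) : rel T :=
  [rel x y | e x y && (((x \in A) && (y \in B)) || ((x \in B) && (y \in A)))].

(* Main.v *)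
Require Import Defs.
From mathcomp Require Import all_boot.
From mathcomp Require Import zify.
From Stdlib Require Import Lia.
Set Implicit Arguments. Unset Strict Implicit. Unset Printing Implicit Defensive.

Lemma connect_rind (T : finType) (r : rel T) (P : T -> Prop) x :
  P x -> (forall y z, P y -> r y z -> P z) -> forall y, connect r x y -> P y.
Proof.
move=> Px step y /connectP[p pp ->]; elim: p x Px pp => //= z p IH x Px /andP[rxz pp].
exact: IH (step _ _ Px rxz) pp.
Qed.

Lemma exit_edge (T : finType) (r : rel T) (Q : {set T}) x y :
  connect r x y -> x \in Q -> y \notin Q ->
  exists q q', [/\ q \in Q, q' \notin Q & r q q'].
Proof.
move=> cxy xQ yQ.
case: (boolP [exists q, exists q', [&& q \in Q, q' \notin Q & r q q']]).
  by move=> /existsP[q /existsP[q' /and3P[? ? ?]]]; exists q, q'.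
move=> /existsPn H.
have : y \in Q.
  apply: (@connect_rind _ r (fun z => z \in Q) x xQ _ y cxy) => u v uQ ruv.
  apply/negPn/negP => vQ; move: (H u) => /existsPn /(_ v); by rewrite uQ vQ ruv.
by rewrite (negbTE yQ).
Qed.

Lemma induced_sym (T : finType) (r : rel T) (X : {set T}) : symmetric r -> symmetric (induced r X).
Proof. by move=> sr x y; rewrite /induced /= sr andbCA. Qed.

Lemma connect_induced_in (T : finType) (r : rel T) (X : {set T}) x y :
  x \in X -> connect (induced r X) x y -> y \in X.
Proof.
move=> xX; apply: (@connect_rind _ _ (fun z => z \in X) x xX) => u v _ /and3P[].
by [].
Qed.

Lemma connect_induced_mono (T : finType) (r r' : rel T) (X Y : {set T}) :
  {subset X <= Y} -> subrel r r' ->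
  subrel (connect (induced r X)) (connect (induced r' Y)).
Proof.
move=> sXY srr; apply: connect_sub => x y /and3P[xX yX rxy]; apply: connect1.
by rewrite /induced /= (sXY x xX) (sXY y yX) (srr _ _ rxy).
Qed.

Lemma cclosedR (T : finType) (r : rel T) (Y : {set T}) x y :
  (forall u v, u \in Y -> r u v -> v \in Y) -> x \in Y -> connect r x y ->
  y \in Y /\ connect (induced r Y) x y.
Proof.
move=> cl xY.
apply: (@connect_rind _ r (fun z => z \in Y /\ connect (induced r Y) x z) x).
  by split=> //; exact: connect0.
move=> u v [uY cu] ruv; have vY := cl _ _ uY ruv; split=> //.
apply: connect_trans cu _; apply: connect1; by rewrite /induced /= uY vY.
Qed.

Lemma crossE (T : finType) (e : rel T) (A V : {set T}) x y :
  x \in V -> y \in V -> cross e A (V :\: A) x y = e x y && ((x \in A) != (y \in A)).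
Proof.
move=> xV yV; rewrite /cross /= !inE xV yV.
by case: (x \in A); case: (y \in A); rewrite ?andbT ?andbF.
Qed.

Lemma cross_sym (T : finType) (e : rel T) (A B : {set T}) : symmetric e -> symmetric (cross e A B).
Proof.
move=> se x y; rewrite /cross /= se; congr (_ && _); rewrite orbC; congr (_ || _); exact: andbC.
Qed.

Lemma cross_in (T : finType) (e : rel T) (A B : {set T}) x y : cross e A B x y -> (x \in A :|: B) && (y \in A :|: B).
Proof.
rewrite /cross /= !inE => /andP[_ /orP[/andP[-> ->]|/andP[-> ->]]]; by rewrite ?orbT.
Qed.

Definition ccount (T : finType) (e : rel T) (V A : {set T}) :=
  #|[set p : T * T | [&& p.1 \in V, p.2 \in V & cross e A (V :\: A) p.1 p.2]]|.

Lemma rootpart_step (T : finType) (e : rel T) (V A : {set T}) r :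
  symmetric e -> connected_on (induced e V) V -> r \in V -> A \subset V ->
  (forall y, y \in V -> e r y -> (y \in A) != (r \in A)) ->
  ~~ [forall y, (y \in V) ==> connect (cross e A (V :\: A)) r y] ->
  exists A' : {set T}, [/\ A' \subset V,
    (forall y, y \in V -> e r y -> (y \in A') != (r \in A')) &
    ccount e V A < ccount e V A'].
Proof.
move=> se cV rV sAV Hr /forallPn[y0]; rewrite negb_imply => /andP[y0V ny0].
set cr := cross e A (V :\: A).
pose Q := [set y | connect cr r y].
pose A' := (A :&: Q) :|: ((V :\: Q) :\: A).
have memA' z : z \in V -> (z \in A') = (if z \in Q then z \in A else z \notin A).
  by move=> zV; rewrite !inE zV; case: (connect cr r z); case: (z \in A).
have rQ : r \in Q by rewrite inE connect0.
have Qstep x y : x \in Q -> cr x y -> y \in Q.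
  by rewrite !inE => cx cxy; apply: connect_trans cx (connect1 cxy).
have Qstep' x y : y \in Q -> cr x y -> x \in Q.
  by move=> yQ cxy; apply: Qstep yQ _; rewrite /cr cross_sym.
exists A'; split.
- apply/subsetP => z; rewrite !inE => /orP[/andP[zA _]|/andP[_ /andP[_ ->//]]].
  exact: (subsetP sAV).
- move=> y yV ery.
  have yQ : y \in Q.
    apply: Qstep rQ _; rewrite /cr crossE // ery /=; by rewrite eq_sym Hr.
  by rewrite (memA' _ yV) (memA' _ rV) yQ rQ Hr.
apply: proper_card; apply/properP; split.
  apply/subsetP => [[x y]]; rewrite !inE /= => /and3P[xV yV cxy].
  rewrite xV yV /=; move: (cxy); rewrite !crossE // => /andP[exy nxy].
  rewrite exy (memA' _ xV) (memA' _ yV) /=.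
  case xQ: (x \in Q).
    by rewrite (Qstep _ _ xQ cxy).
  case yQ: (y \in Q); last by move: nxy; case: (x \in A); case: (y \in A).
  by rewrite (Qstep' _ _ yQ cxy) in xQ.
have y0Q : y0 \notin Q by rewrite inE.
have [q [q' [qQ q'Q /and3P[qV q'V eqq']]]] := exit_edge (cV _ _ rV y0V) rQ y0Q.
have ncr : ~~ cr q q' by apply/negP => /(Qstep _ _ qQ); rewrite (negbTE q'Q).
have nA : (q \in A) = (q' \in A).
  by move: ncr; rewrite /cr crossE // eqq' /=; case: (q \in A); case: (q' \in A).
exists (q, q'); rewrite !inE /= qV q'V /= !crossE // eqq' /=; last by rewrite nA eqxx.
rewrite (memA' _ qV) (memA' _ q'V) qQ (negbTE q'Q) nA.
by case: (q' \in A).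
Qed.

Lemma exists_rootpart (T : finType) (e : rel T) (V : {set T}) r :
  symmetric e -> irreflexive e -> connected_on (induced e V) V -> r \in V ->
  exists A : {set T}, [/\ A \subset V, connected_on (cross e A (V :\: A)) V &
     forall y, y \in V -> e r y -> (y \in A) != (r \in A)].
Proof.
move=> se ie cV rV.
suff: forall n (A : {set T}), #|[set: T * T]| - ccount e V A <= n -> A \subset V ->
  (forall y, y \in V -> e r y -> (y \in A) != (r \in A)) ->
  exists A : {set T}, [/\ A \subset V, connected_on (cross e A (V :\: A)) V &
     forall y, y \in V -> e r y -> (y \in A) != (r \in A)].
  move=> /(_ _ [set r] (leqnn _)); apply.
  - by rewrite sub1set.
  - move=> y yV ery; rewrite !inE eqxx; apply/negP => /eqP /eqP yr.
    by move: ery; rewrite yr ie.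
have cmax (A : {set T}) : ccount e V A <= #|[set: T * T]|.
  by apply: subset_leq_card; apply: subsetT.
elim=> [|n IH] A Hn sAV Hr.
  case: (boolP [forall y, (y \in V) ==> connect (cross e A (V :\: A)) r y]).
    move=> /forallP H; exists A; split=> // x y xV yV.
    apply: (@connect_trans _ _ r).
      rewrite (sym_connect_sym (cross_sym _ _ se)).
      by move: (H x); rewrite xV.
    by move: (H y); rewrite yV.
  move=> nc; have [A' [_ _ lt]] := rootpart_step se cV rV sAV Hr nc.
  have := cmax A'; move: Hn lt; set N := #|[set: T * T]|.
  set a := ccount e V A; set b := ccount e V A'; lia.
case: (boolP [forall y, (y \in V) ==> connect (cross e A (V :\: A)) r y]).
  move=> /forallP H; exists A; split=> // x y xV yV.
  apply: (@connect_trans _ _ r).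
    rewrite (sym_connect_sym (cross_sym _ _ se)).
    by move: (H x); rewrite xV.
  by move: (H y); rewrite yV.
move=> nc; have [A' [sA'V HrA' lt]] := rootpart_step se cV rV sAV Hr nc.
apply: (IH A') => //.
have := cmax A'; move: Hn lt; set N := #|[set: T * T]|.
set a := ccount e V A; set b := ccount e V A'; lia.
Qed.

Lemma comp_sub (T : finType) (e : rel T) (X : {set T}) x : comp_of e X x \subset X.
Proof. by apply/subsetP => y; rewrite inE => /andP[]. Qed.

Lemma comp_mono (T : finType) (e : rel T) (X Y : {set T}) x :
  X \subset Y -> comp_of e X x \subset comp_of e Y x.
Proof.
move=> /subsetP sXY; apply/subsetP => y; rewrite !inE => /andP[yX cxy].
rewrite (sXY _ yX) /=; exact: connect_induced_mono cxy.
Qed.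

Lemma comp_self (T : finType) (e : rel T) (X : {set T}) x : x \in X -> x \in comp_of e X x.
Proof. by move=> xX; rewrite inE xX connect0. Qed.

Lemma comp_same (T : finType) (e : rel T) (X : {set T}) x y :
  symmetric e -> y \in comp_of e X x -> comp_of e X x \subset comp_of e X y.
Proof.
move=> se; rewrite inE => /andP[yX cxy]; apply/subsetP => z; rewrite !inE => /andP[zX cxz].
rewrite zX /=; apply: connect_trans _ cxz.
by rewrite (sym_connect_sym (induced_sym _ se)).
Qed.

Definition side (T : finType) (H A : {set T}) z := if z \in A then A else H :\: A.

Definition pot (T : finType) (e : rel T) (H A : {set T}) :=
  \sum_(z in H) #|T|.+1 ^ #|comp_of e (side H A z) z|.

Lemma noncut_exists (T : finType) (e : rel T) (U A : {set T}) (C : {set T}) u0 :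
  symmetric e -> A \subset U -> connected_on (cross e A (U :\: A)) U ->
  C \subset A -> u0 \in U :\: A -> #|U :\: A| < #|C| ->
  exists2 a, a \in C &
    forall b, b \in U :\ a -> connect (induced (cross e A (U :\: A)) (U :\ a)) u0 b.
Proof.
move=> se sAU cX sCA u0B ltBC.
set B := U :\: A in u0B ltBC cX *; set X := cross e A B.
have Xsym : symmetric X by apply: cross_sym.
have u0U : u0 \in U by move: u0B; rewrite inE => /andP[].
have u0A : u0 \notin A by move: u0B; rewrite inE => /andP[].
have XU x y : X x y -> (x \in U) && (y \in U).
  move=> /cross_in; rewrite !inE => /andP[/orP[xA|/andP[_ ->]] /orP[yA|/andP[_ ->]]];
  by rewrite ?(subsetP sAU _ xA) ?(subsetP sAU _ yA).
have XA x y : x \in A -> X x y -> y \in B.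
  move=> xA Xxy; have /andP[xU yU] := XU _ _ Xxy.
  move: Xxy; rewrite /X crossE // xA => /andP[_]; by rewrite inE yU andbT.
pose Ra a := induced X (U :\ a).
have Rasym a : symmetric (Ra a) by apply: induced_sym.
case: (boolP [exists a, (a \in C) && [forall b, (b \in U :\ a) ==> connect (Ra a) u0 b]]).
  move=> /existsP[a /andP[aC /forallP H]]; exists a => // b bU.
  by move: (H b); rewrite bU.
move=> /existsPn Hn.
have ex a : a \in C -> exists b, X a b && ~~ connect (Ra a) u0 b.
  move=> aC; move: (Hn a); rewrite aC /= => /forallPn[b0]; rewrite negb_imply => /andP[b0U nb0].
  have b0U' : b0 \in U by move: b0U; rewrite !inE => /andP[].
  pose Q' := [set y | connect (Ra a) b0 y].
  have b0Q : b0 \in Q' by rewrite inE connect0.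
  have u0Q : u0 \notin Q'.
    by rewrite inE (sym_connect_sym (Rasym a)).
  have [q [q' [qQ q'Q Xqq']]] := exit_edge (cX _ _ b0U' u0U) b0Q u0Q.
  have {}Xqq' : X q q' := Xqq'.
  have qUa : q \in U :\ a by move: qQ; rewrite inE; exact: connect_induced_in.
  have q'U : q' \in U by have /andP[] := XU _ _ Xqq'.
  case: (eqVneq q' a) => [q'a|q'a].
    exists q; rewrite q'a in Xqq'; rewrite Xsym Xqq' /=; apply/negP => cu.
    move: nb0; rewrite (connect_trans cu) //.
    by move: qQ; rewrite inE (sym_connect_sym (Rasym a)).
  move: q'Q; rewrite inE; move: qQ; rewrite inE => cq.
  rewrite (connect_trans cq) // connect1 // /Ra /induced /= qUa Xqq' !inE q'a q'U.
  by [].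
pose g a := odflt u0 [pick b | X a b && ~~ connect (Ra a) u0 b].
have gP a : a \in C -> X a (g a) && ~~ connect (Ra a) u0 (g a).
  move=> aC; rewrite /g; case: pickP => [b //|H].
  by have [b] := ex a aC; rewrite H.
have gB a : a \in C -> g a \in B :\ u0.
  move=> aC; have /andP[Xag ng] := gP a aC.
  rewrite !inE; move: (XA _ _ (subsetP sCA _ aC) Xag); rewrite inE => ->; rewrite andbT.
  by apply/negP => /eqP gu; move: ng; rewrite gu connect0.
have ginj : {in C &, injective g}.
  move=> a a' aC a'C gaa'; apply/eqP/negP => /negP naa'.
  have /andP[Xab nab] := gP a aC; have /andP[Xa'b na'b] := gP a' a'C.
  rewrite -gaa' in Xa'b na'b.
  set b := g a in Xab nab Xa'b na'b.
  have aA := subsetP sCA _ aC; have a'A := subsetP sCA _ a'C.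
  have bB : b \in B by have := gB _ aC; rewrite inE => /andP[].
  have bU : b \in U by move: bB; rewrite inE => /andP[].
  have aU := subsetP sAU _ aA; have a'U := subsetP sAU _ a'A.
  have bna : b != a by apply/eqP => ba; move: bB; rewrite inE ba aA.
  have bna' : b != a' by apply/eqP => ba; move: bB; rewrite inE ba a'A.
  have ua a1 a2 : a1 != a2 -> a1 \in U -> a2 \in U -> b != a1 -> b != a2 ->
      X a2 b -> ~~ connect (Ra a1) u0 b -> ~~ connect (Ra a1) u0 a2.
    move=> n12 a1U a2U b1 b2 Xb nb; apply/negP => c2; move: nb.
    rewrite (connect_trans c2) // connect1 // /Ra /induced /= Xb !inE a2U bU b1 andbT.
    by rewrite eq_sym n12.
  have n1 := ua a a' naa' aU a'U bna bna' Xa'b nab.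
  have n2 := ua a' a (_ : a' != a) a'U aU bna' bna Xab na'b.
  have n2' : ~~ connect (Ra a') u0 a by apply: n2; rewrite eq_sym.
  pose W := U :\: [set a; a'].
  have inW z : z \in U -> z != a -> z != a' -> z \in W.
    by move=> zU za za'; rewrite !inE zU negb_or za za'.
  have u0a : u0 != a by apply/eqP => ua0; move: u0A; rewrite ua0 aA.
  have u0a' : u0 != a' by apply/eqP => ua0; move: u0A; rewrite ua0 a'A.
  pose Q := [set y | connect (induced X W) u0 y].
  have u0Q : u0 \in Q by rewrite inE connect0.
  have aQ : a \notin Q.
    rewrite inE; apply/negP => /(connect_induced_in (inW _ u0U u0a u0a')).
    by rewrite !inE eqxx.
  have [q [q' [qQ q'Q Xqq']]] := exit_edge (cX _ _ u0U aU) u0Q aQ.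
  have {}Xqq' : X q q' := Xqq'.
  have qW : q \in W by move: qQ; rewrite inE; exact: connect_induced_in (inW _ u0U u0a u0a').
  have q'U : q' \in U by have /andP[] := XU _ _ Xqq'.
  have qU : q \in U by move: qW; rewrite !inE => /andP[].
  have qa : q != a by move: qW; rewrite !inE => /andP[/norP[]].
  have qa' : q != a' by move: qW; rewrite !inE => /andP[/norP[]].
  have cq : connect (induced X W) u0 q by move: qQ; rewrite inE.
  have cW a1 : a1 \in [set a; a'] -> subrel (connect (induced X W)) (connect (Ra a1)).
    move=> a1in; apply: connect_induced_mono => // z; rewrite !inE => /andP[zn ->].
    rewrite andbT; apply: contra zn => /eqP ->; by move: a1in; rewrite !inE.
  case: (eqVneq q' a) => [q'a|q'na].
    move: n2'; rewrite -q'a; apply/negP/negPn.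
    apply: (connect_trans (cW a' _ _ _ cq)); first by rewrite !inE eqxx orbT.
    apply: connect1; rewrite /Ra /induced /= Xqq' !inE qU q'U q'a naa' andbT.
    by rewrite qa'.
  case: (eqVneq q' a') => [q'a'|q'na'].
    move: n1; rewrite -q'a'; apply/negP/negPn.
    apply: (connect_trans (cW a _ _ _ cq)); first by rewrite !inE eqxx.
    apply: connect1; rewrite /Ra /induced /= Xqq' !inE qU q'U qa.
    by rewrite q'a' eq_sym naa'.
  move: q'Q; rewrite inE => /negP; apply.
  apply: connect_trans cq (connect1 _); by rewrite /induced /= qW Xqq' (inW _ q'U q'na q'na').
have sub : g @: C \subset B :\ u0 by apply/subsetP => _ /imsetP[a aC ->]; exact: gB.
have := subset_leq_card sub; rewrite (card_in_imset ginj).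
have := cardsD1 u0 B; rewrite u0B; move: ltBC; lia.
Qed.

Lemma two_elems (T : finType) (C : {set T}) x : 1 < #|C| -> exists2 y, y \in C & y != x.
Proof.
move=> h; have := cardsD1 x C; have : 0 < #|C :\ x|.
  by move=> /=; move: h; have := cardsD1 x C; case: (x \in C) => /=; lia.
rewrite card_gt0 => /set0Pn[y]; rewrite !inE => /andP[yx yC] _; by exists y.
Qed.

Lemma arith1 x y : x + 2 <= y -> x + 1 <= y.-1. Proof. lia. Qed.
Lemma arith2 n u a b c : n <= u.*2 -> u < c -> c <= a -> a + b = n -> b + 2 <= c.
Proof. rewrite -mul2n; lia. Qed.

Lemma cardD1_bound (T : finType) (U A : {set T}) a :
  #|U :\: (A :\ a)| <= #|U :\: A| + 1.
Proof.
have : U :\: (A :\ a) \subset a |: (U :\: A).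
  apply/subsetP => y; rewrite !inE negb_and negbK => /andP[/orP[->//|yA] yU].
  by rewrite yA yU orbT.
move=> /subset_leq_card; rewrite cardsU1 => h; apply: (leq_trans h).
by rewrite addnC leq_add2l; case: (a \notin _).
Qed.

Lemma base_step (T : finType) (e : rel T) (U A : {set T}) a0 :
  symmetric e -> irreflexive e -> A \subset U -> connected_on (cross e A (U :\: A)) U ->
  a0 \in A -> uphalf #|U| < #|comp_of e A a0| ->
  exists A' : {set T}, [/\ A' \subset U, connected_on (cross e A' (U :\: A')) U &
     pot e U A' < pot e U A].
Proof.
move=> se ie sAU cX a0A big.
set C := comp_of e A a0 in big.
set B := U :\: A in cX *.
have sCA : C \subset A by apply: comp_sub.
have cardU : #|A| + #|B| = #|U|.
  by rewrite -(cardsID A U) (setIidPr sAU).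
have h2 : #|U| <= (uphalf #|U|).*2 by rewrite uphalfK leq_addl.
have CA : #|C| <= #|A| by apply: subset_leq_card.
have ltBC : #|B| + 2 <= #|C| by apply: arith2 h2 big CA cardU.
have C2 : 1 < #|C| by apply: leq_trans ltBC; rewrite addn2.
have [a1 a1C a1a0] := two_elems a0 C2.
have a0U : a0 \in U := subsetP sAU _ a0A.
have a1U : a1 \in U := subsetP sAU _ (subsetP sCA _ a1C).
have [u0 u0B] : exists u0, u0 \in B.
  have a0Q : a0 \in [set a0] by rewrite inE.
  have a1Q : a1 \notin [set a0] by rewrite inE.
  have [q [q' [qQ q'Q Xqq']]] := exit_edge (cX _ _ a0U a1U) a0Q a1Q.
  move: qQ; rewrite inE => /eqP qa0; subst q.
  have /andP[_ q'U] : (a0 \in A :|: B) && (q' \in A :|: B) by apply: cross_in Xqq'.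
  have q'U' : q' \in U by move: q'U; rewrite !inE => /orP[/(subsetP sAU)|/andP[_ ->]].
  exists q'; move: Xqq'; rewrite crossE // a0A => /andP[_ nq'].
  by rewrite inE q'U' andbT.
have ltBC1 : #|B| < #|C| by apply: leq_trans ltBC; rewrite addn2 ltnS leqnSn.
have [a aC NC] := noncut_exists se sAU cX sCA u0B ltBC1.
have aA := subsetP sCA _ aC; have aU := subsetP sAU _ aA.
have [c cA /andP[ac eac]] : exists2 c, c \in A & (c != a) && e a c.
  have [c0 c0C c0a] := two_elems a C2.
  have : c0 \in comp_of e A a by apply: (subsetP (comp_same se aC)).
  rewrite inE => /andP[_ cac0].
  have aQ : a \in [set a] by rewrite inE.
  have c0Q : c0 \notin [set a] by rewrite inE.
  have [q [q' [qQ q'Q /and3P[_ q'A eqq']]]] := exit_edge cac0 aQ c0Q.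
  move: qQ; rewrite inE => /eqP qa; subst q.
  exists q' => //; move: q'Q; rewrite inE eq_sym => ->; by [].
have cU : c \in U := subsetP sAU _ cA.
pose A' := A :\ a.
have memA' z : (z \in A') = (z != a) && (z \in A) by rewrite !inE.
exists A'; split.
- by apply/subsetP => z; rewrite memA' => /andP[_ /(subsetP sAU)].
- have reach z : z \in U -> connect (cross e A' (U :\: A')) u0 z.
    have sub : subrel (connect (induced (cross e A B) (U :\ a)))
                      (connect (cross e A' (U :\: A'))).
      apply: connect_sub => x y /and3P[xUa yUa Xxy]; apply: connect1.
      move: xUa yUa; rewrite !inE => /andP[xa xU] /andP[ya yU].
      move: Xxy; rewrite !crossE // !memA' xa ya.
      by [].
    move=> zU; case: (eqVneq z a) => [->|za]; last by apply: sub; apply: NC; rewrite !inE za.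
    apply: (connect_trans (sub _ _ (NC c _))); first by rewrite !inE ac.
    apply: connect1; rewrite crossE // se eac !memA' eqxx ac /=; by rewrite cA.
  move=> x y xU yU; apply: (@connect_trans _ _ u0); last exact: reach.
  by rewrite (sym_connect_sym (cross_sym _ _ se)); apply: reach.
pose N := #|T|.+1.
have N0 : 0 < N by [].
set c0 := #|C| in big ltBC CA C2 ltBC1 *.
have newle z : z \in U -> N ^ #|comp_of e (side U A' z) z| <=
    (if z \in A' then N ^ #|comp_of e (side U A z) z| else N ^ c0.-1).
  move=> zU; rewrite /side; case: ifP => zA'.
    have zA : z \in A by move: zA'; rewrite memA' => /andP[].
    rewrite zA leq_pexp2l //; apply: subset_leq_card; apply: comp_mono.
    exact: subsetDl.
  rewrite leq_pexp2l //; apply: (leq_trans (subset_leq_card (comp_sub _ _ _))).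
  apply: leq_trans (cardD1_bound _ _ _) _; exact: arith1.
have olda : N ^ c0 <= N ^ #|comp_of e (side U A a) a|.
  rewrite /side aA leq_pexp2l //; apply: subset_leq_card; exact: comp_same.
pose old z := N ^ #|comp_of e (side U A z) z|.
have split1 (F : T -> nat) : \sum_(z in U) F z =
   \sum_(z in U) (if z \in A' then F z else 0) + \sum_(z in U) (if z \in A' then 0 else F z).
  by rewrite -big_split /=; apply: eq_bigr => z _; case: (z \in A'); rewrite ?addn0.
rewrite /pot.
apply: (@leq_trans (\sum_(z in U) (if z \in A' then old z else N ^ c0.-1)).+1).
  by rewrite ltnS; apply: leq_sum => z zU; apply: newle.
rewrite (split1 (fun z => if z \in A' then old z else N ^ c0.-1)).
rewrite (split1 old).
have e1 : \sum_(z in U) (if z \in A' then (if z \in A' then old z else N ^ c0.-1) else 0)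
     = \sum_(z in U) (if z \in A' then old z else 0).
  by apply: eq_bigr => z _; case: (z \in A').
rewrite e1 -addnS leq_add2l.
have s2 : \sum_(z in U) (if z \in A' then 0 else (if z \in A' then old z else N ^ c0.-1))
    <= #|U| * N ^ c0.-1.
  rewrite -sum_nat_const; apply: leq_sum => z _; by case: (z \in A').
have s3 : N ^ c0 <= \sum_(z in U) (if z \in A' then 0 else old z).
  rewrite (bigD1 a aU) /= memA' eqxx /=; exact: leq_trans olda (leq_addr _ _).
have s4 : #|U| * N ^ c0.-1 < N ^ c0.
  have UN : #|U| < N by rewrite ltnS max_card.
  have -> : N ^ c0 = N * N ^ c0.-1 by rewrite -expnS prednK // ltnW.
  by rewrite ltn_mul2r expn_gt0 N0 UN.
by apply: leq_trans _ s3; apply: leq_ltn_trans s2 s4.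
Qed.

Lemma setDDK (T : finType) (U A : {set T}) : A \subset U -> U :\: (U :\: A) = A.
Proof.
move=> sAU; apply/setP => z; rewrite !inE negb_and negbK.
case zA: (z \in A); case zU: (z \in U) => //=.
by rewrite (subsetP sAU _ zA) in zU.
Qed.

Lemma side_swap (T : finType) (U A : {set T}) z : A \subset U -> z \in U ->
  side U (U :\: A) z = side U A z.
Proof.
move=> sAU zU; rewrite /side setDDK // !inE zU andbT.
by case: (z \in A).
Qed.

Lemma pot_swap (T : finType) (e : rel T) (U A : {set T}) : A \subset U ->
  pot e U (U :\: A) = pot e U A.
Proof. move=> sAU; apply: eq_bigr => z zU; by rewrite side_swap. Qed.

Lemma cconn_swap (T : finType) (e : rel T) (U A : {set T}) : A \subset U ->
  connected_on (cross e A (U :\: A)) U ->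
  connected_on (cross e (U :\: A) (U :\: (U :\: A))) U.
Proof.
move=> sAU cX x y xU yU; rewrite setDDK //.
rewrite (@eq_connect _ _ (cross e A (U :\: A))); first exact: cX.
by move=> u v; rewrite /cross /= orbC.
Qed.

Lemma base_part (T : finType) (e : rel T) (U : {set T}) r :
  symmetric e -> irreflexive e -> connected_on (induced e U) U -> r \in U ->
  exists A : {set T}, [/\ A \subset U, connected_on (cross e A (U :\: A)) U &
    forall z, z \in U -> #|comp_of e (side U A z) z| <= uphalf #|U|].
Proof.
move=> se ie cU rU.
have [A0 [sA0 cA0 _]] := exists_rootpart se ie cU rU.
suff: forall n (A : {set T}), pot e U A <= n -> A \subset U ->
    connected_on (cross e A (U :\: A)) U ->
  exists A : {set T}, [/\ A \subset U, connected_on (cross e A (U :\: A)) U &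
    forall z, z \in U -> #|comp_of e (side U A z) z| <= uphalf #|U|].
  by move=> /(_ _ A0 (leqnn _)); apply.
elim=> [|n IH] A Hn sAU cA.
  exists A; split=> // z zU; move: Hn; rewrite leqn0 /pot.
  by rewrite (bigD1 z zU) /= addn_eq0 expn_eq0.
case: (boolP [forall z, (z \in U) ==> (#|comp_of e (side U A z) z| <= uphalf #|U|)]).
  move=> /forallP H; exists A; split=> // z zU; by move: (H z); rewrite zU.
move=> /forallPn[z]; rewrite negb_imply -ltnNge => /andP[zU big].
have [A' [sA' cA' lt]] : exists A' : {set T}, [/\ A' \subset U,
     connected_on (cross e A' (U :\: A')) U & pot e U A' < pot e U A].
  move: big; rewrite /side; case: ifP => zA big.
    exact: base_step se ie sAU cA zA big.
  rewrite -pot_swap //; apply: base_step se ie (subsetDl _ _) (cconn_swap sAU cA) _ big.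
  by rewrite !inE zU zA.
apply: (IH A') => //; rewrite -ltnS; exact: leq_trans lt Hn.
Qed.

Lemma side_in (T : finType) (H A : {set T}) z u v : A \subset H ->
  u \in side H A z -> v \in side H A z -> (u \in A) = (v \in A).
Proof.
move=> sAH; rewrite /side; case: (z \in A) => [-> ->//|]; rewrite !inE.
by move=> /andP[/negbTE -> _] /andP[/negbTE -> _].
Qed.

Lemma side_sub (T : finType) (H A : {set T}) z : A \subset H -> side H A z \subset H.
Proof. by move=> sAH; rewrite /side; case: ifP => // _; apply: subsetDl. Qed.

Lemma comp_restrict (T : finType) (e : rel T) (X X' Y : {set T}) z :
  z \in Y -> (forall u v, u \in Y -> u \in X -> v \in X -> e u v -> v \in Y) ->
  (forall w, w \in Y -> w \in X -> w \in X') ->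
  comp_of e X z \subset comp_of e X' z.
Proof.
move=> zY cl sub; apply/subsetP => y; rewrite !inE => /andP[yX czy].
have cl' : forall u v, u \in Y -> induced e X u v -> v \in Y.
  by move=> u v uY /and3P[uX vX euv]; exact: cl uY uX vX euv.
have [yY c2] := cclosedR cl' zY czy.
rewrite (sub _ yY yX) /=; apply: connect_sub c2 => u v /and3P[uY vY /and3P[uX vX euv]].
by apply: connect1; rewrite /induced /= (sub _ uY uX) (sub _ vY vX).
Qed.

Lemma glue (T : finType) (e : rel T) (H1 A1 H2 A2 : {set T}) x :
  symmetric e ->
  A1 \subset H1 -> A2 \subset H2 -> x \in H1 -> x \in H2 ->
  (forall z, z \in H1 -> z \in H2 -> z = x) ->
  (forall u v, u \in H1 -> v \in H2 -> u != x -> v != x -> ~~ e u v) ->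
  (x \in A1) = (x \in A2) ->
  (forall v, v \in H2 -> e x v -> (v \in A2) != (x \in A2)) ->
  [/\ A1 :|: A2 \subset H1 :|: H2,
      (forall z, z \in H1 -> (z \in A1 :|: A2) = (z \in A1)),
      (forall z, z \in H2 -> (z \in A1 :|: A2) = (z \in A2)),
      (connected_on (induced e H1) H1 -> connected_on (induced e H2) H2 ->
         connected_on (induced e (H1 :|: H2)) (H1 :|: H2)) &
      (connected_on (cross e A1 (H1 :\: A1)) H1 -> connected_on (cross e A2 (H2 :\: A2)) H2 ->
         connected_on (cross e (A1 :|: A2) ((H1 :|: H2) :\: (A1 :|: A2))) (H1 :|: H2))] /\
  [/\ (forall z, z \in H1 -> comp_of e (side (H1 :|: H2) (A1 :|: A2) z) z
                              \subset comp_of e (side H1 A1 z) z) &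
      (forall z, z \in H2 -> z != x -> comp_of e (side (H1 :|: H2) (A1 :|: A2) z) z
                              \subset comp_of e (side H2 A2 z) z)].
Proof.
move=> se sA1 sA2 xH1 xH2 hI hE hal hop.
set H := H1 :|: H2; set A := A1 :|: A2.
have m1 z : z \in H1 -> (z \in A) = (z \in A1).
  move=> zH1; rewrite !inE; case zA2: (z \in A2); last by rewrite orbF.
  have zx := hI _ zH1 (subsetP sA2 _ zA2); move: zA2; rewrite zx => zA2.
  by rewrite hal zA2.
have m2 z : z \in H2 -> (z \in A) = (z \in A2).
  move=> zH2; rewrite !inE; case zA1: (z \in A1) => //=.
  have zx := hI _ (subsetP sA1 _ zA1) zH2; move: zA1; rewrite zx => zA1.
  by rewrite -hal zA1.
have sAH : A \subset H.
  by apply/subsetP => z; rewrite !inE => /orP[/(subsetP sA1)->|/(subsetP sA2)->]; rewrite ?orbT.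
have HH z : z \in H -> (z \in H1) || (z \in H2) by rewrite inE.
have cr1 (Hi Ai : {set T}) : Hi \subset H -> Ai \subset Hi ->
    (forall z, z \in Hi -> (z \in A) = (z \in Ai)) ->
    subrel (cross e Ai (Hi :\: Ai)) (cross e A (H :\: A)).
  move=> sub sAi mi u v cuv.
  have /andP[uH vH] := cross_in cuv.
  have inHi w : w \in Ai :|: (Hi :\: Ai) -> w \in Hi.
    by rewrite !inE => /orP[/(subsetP sAi)|/andP[_ ->]].
  have uHi := inHi _ uH; have vHi := inHi _ vH.
  move: cuv; rewrite !crossE ?(subsetP sub _ uHi) ?(subsetP sub _ vHi) //.
  by rewrite (mi u uHi) (mi v vHi).
split; [split=> //|split].
- move=> c1 c2 u v uH vH.
  have cH y : y \in H -> connect (induced e H) x y.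
    move=> /HH /orP[yH1|yH2].
      exact: connect_induced_mono (subsetP (subsetUl H1 H2)) (fun _ _ h => h) _ _ (c1 _ _ xH1 yH1).
    exact: connect_induced_mono (subsetP (subsetUr H1 H2)) (fun _ _ h => h) _ _ (c2 _ _ xH2 yH2).
  apply: (@connect_trans _ _ x); last exact: cH.
  by rewrite (sym_connect_sym (induced_sym _ se)); apply: cH.
- move=> c1 c2.
  have s1 := cr1 _ _ (subsetUl H1 H2) sA1 m1.
  have s2 := cr1 _ _ (subsetUr H1 H2) sA2 m2.
  have cH y : y \in H -> connect (cross e A (H :\: A)) x y.
    move=> /HH /orP[yH1|yH2].
      exact: connect_sub (fun u v h => connect1 (s1 u v h)) _ _ (c1 _ _ xH1 yH1).
    exact: connect_sub (fun u v h => connect1 (s2 u v h)) _ _ (c2 _ _ xH2 yH2).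
  move=> u v uH vH; apply: (@connect_trans _ _ x); last exact: cH.
  by rewrite (sym_connect_sym (cross_sym _ _ se)); apply: cH.
- move=> z zH1; have zH1c := zH1; apply: comp_restrict zH1c _ _.
    move=> u v uH1 uX vX euv; have vH := subsetP (side_sub z sAH) _ vX.
    case/HH/orP: vH => // vH2.
    case: (eqVneq v x) => [->//|vx].
    case: (eqVneq u x) => [ux|uxn]; last first.
      by move: (hE _ _ uH1 vH2 uxn vx); rewrite euv.
    have := side_in sAH uX vX; rewrite ux (m1 _ xH1) (m2 _ vH2) hal => same.
    have exv : e x v by rewrite -ux.
    by move: (hop _ vH2 exv); rewrite same eqxx.
  move=> w wH1; rewrite /side (m1 _ zH1); case: ifP => _.
    by rewrite (m1 _ wH1).
  by move=> /setDP[_ nA]; apply/setDP; split=> //; rewrite -(m1 _ wH1).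
- move=> z zH2 zx; have zY : z \in H2 :\ x by rewrite !inE zx zH2.
  apply: comp_restrict zY _ _.
    move=> u v; rewrite !inE => /andP[ux uH2] uX vX euv.
    have vH := subsetP (side_sub z sAH) _ vX.
    case vH2: (v \in H2); last first.
      have vH1 : v \in H1 by move: vH; rewrite inE vH2 orbF.
      have vx : v != x by apply/eqP => vx; rewrite vx xH2 in vH2.
      by move: (hE _ _ vH1 uH2 vx ux); rewrite se euv.
    rewrite andbT; apply/eqP => vx.
    have := side_in sAH uX vX; rewrite vx (m2 _ uH2) (m2 _ xH2) => same.
    have exu : e x u by rewrite se -vx.
    by move: (hop _ uH2 exu); rewrite same eqxx.
  move=> w; rewrite !inE => /andP[_ wH2]; rewrite /side (m2 _ zH2); case: ifP => _.
    by rewrite (m2 _ wH2).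
  by move=> /setDP[_ nA]; apply/setDP; split=> //; rewrite -(m2 _ wH2).
Qed.

Lemma compL_adj (T : finType) (e : rel T) (U : {set T}) x z u l :
  symmetric e -> u \in U -> u != x -> l \in comp_of e (U :\ x) z -> e u l ->
  u \in comp_of e (U :\ x) z.
Proof.
move=> se uU ux; rewrite !inE => /andP[/andP[lx lU] czl] eul.
rewrite ux uU /=; apply: connect_trans czl (connect1 _).
by rewrite /induced /= !inE lx lU ux uU se.
Qed.

Lemma compL_facts (T : finType) (e : rel T) (U : {set T}) x z :
  symmetric e -> connected_on (induced e U) U -> x \in U -> z \in U :\ x ->
  [/\ comp_of e (U :\ x) z \subset U :\ x, z \in comp_of e (U :\ x) z,
      connected_on (induced e (U :\: comp_of e (U :\ x) z)) (U :\: comp_of e (U :\ x) z) &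
      connected_on (induced e (x |: comp_of e (U :\ x) z)) (x |: comp_of e (U :\ x) z)].
Proof.
move=> se cU xU zUx.
set L := comp_of e (U :\ x) z.
have sL : L \subset U :\ x by apply: comp_sub.
have zL : z \in L by apply: comp_self.
have xL : x \notin L by apply/negP => /(subsetP sL); rewrite !inE eqxx.
have LU l : l \in L -> l \in U by move=> /(subsetP sL); rewrite !inE => /andP[].
have adj u l : u \in U -> u \notin L -> l \in L -> e l u -> u = x.
  move=> uU uL lL elu; apply/eqP/negPn/negP => ux.
  by move: uL; rewrite (compL_adj se uU ux lL) // se.
split=> //.
- have xUL : x \in U :\: L by rewrite inE xL xU.
  have reach a : a \in U :\: L -> connect (induced e (U :\: L)) x a.
    move=> aUL; have aU : a \in U by move: aUL; rewrite inE => /andP[].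
    have : a \in L \/ connect (induced e (U :\: L)) x a.
      apply: (@connect_rind _ (induced e U) (fun y => y \in L \/ connect (induced e (U :\: L)) x y) x).
      + by right; exact: connect0.
      + move=> y y' [yL|cy] /and3P[yU y'U eyy'].
          case y'L: (y' \in L); first by left.
          by right; rewrite (adj _ _ y'U (negbT y'L) yL eyy'); exact: connect0.
        case y'L: (y' \in L); first by left.
        have yUL : y \in U :\: L by apply: connect_induced_in cy.
        right; apply: connect_trans cy (connect1 _).
        by rewrite /induced /= yUL inE y'L y'U eyy'.
      + exact: cU xU aU.
    by case=> // aL; move: aUL; rewrite inE aL.
  move=> a b aUL bUL; apply: (@connect_trans _ _ x); last exact: reach.
  by rewrite (sym_connect_sym (induced_sym _ se)); apply: reach.
- have zU : z \in U by move: zUx; rewrite !inE => /andP[].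
  have [q [q' [qL q'L /and3P[qU q'U eqq']]]] := exit_edge (cU _ _ zU xU) zL xL.
  have q'x := adj _ _ q'U q'L qL eqq'; subst q'.
  have inL l : l \in L -> connect (induced e (x |: L)) z l.
    move=> lL; move: (lL); rewrite inE => /andP[_ czl].
    have cl : forall u v, u \in L -> induced e (U :\ x) u v -> v \in L.
      move=> u v uL /and3P[_ vUx euv]; have vU : v \in U by move: vUx; rewrite !inE => /andP[].
      have vx : v != x by move: vUx; rewrite !inE => /andP[].
      by have := compL_adj se vU vx uL; apply; rewrite se.
    have [_ c2] := cclosedR cl zL czl.
    apply: connect_sub c2 => u v /and3P[uL vL /and3P[_ _ euv]].
    by apply: connect1; rewrite /induced /= !in_setU1 uL vL euv !orbT.
  have reach a : a \in x |: L -> connect (induced e (x |: L)) x a.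
    rewrite in_setU1 => /orP[/eqP->|aL]; first exact: connect0.
    apply: (@connect_trans _ _ q); first by apply: connect1; rewrite /induced /= !in_setU1 eqxx qL orbT se eqq'.
    apply: (@connect_trans _ _ z); last exact: inL.
    by rewrite (sym_connect_sym (induced_sym _ se)); apply: inL.
  move=> a b aL bL; apply: (@connect_trans _ _ x); last exact: reach.
  by rewrite (sym_connect_sym (induced_sym _ se)); apply: reach.
Qed.

Lemma sum_sub (T : finType) (w : T -> nat) (A B : {set T}) :
  A \subset B -> \sum_(y in A) w y <= \sum_(y in B) w y.
Proof. by move=> sAB; rewrite [X in _ <= X](big_setID A) /= (setIidPr sAB) leq_addr. Qed.

Lemma sum_contract (T : finType) (w : T -> nat) (U0 L : {set T}) x :
  L \subset U0 -> x \in U0 :\: L ->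
  \sum_(y in U0 :\: L) (w y + (if y == x then \sum_(t in L) w t else 0)) = \sum_(y in U0) w y.
Proof.
move=> sL xUL; rewrite big_split /= [X in _ + X](bigD1 x xUL) /= eqxx.
rewrite [X in _ + (_ + X)]big1 ?addn0; last by move=> y /andP[_ /negbTE ->].
by rewrite [RHS](big_setID L) /= (setIidPr sL) addnC.
Qed.

Lemma contract_step (T : finType) (e : rel T) (U L : {set T}) x (H1 A1 H2 A2 : {set T}) :
  symmetric e ->
  (forall u l, u \in U -> u != x -> l \in L -> e u l -> u \in L) ->
  A1 \subset H1 -> H1 \subset U :\: L -> x \in H1 ->
  connected_on (induced e H1) H1 -> connected_on (cross e A1 (H1 :\: A1)) H1 ->
  A2 \subset H2 -> H2 \subset x |: L -> x \in H2 ->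
  connected_on (induced e H2) H2 -> connected_on (cross e A2 (H2 :\: A2)) H2 ->
  (forall v, v \in H2 -> e x v -> (v \in A2) != (x \in A2)) ->
  exists H A : {set T},
   [/\ A \subset H, H = H1 :|: H2, connected_on (induced e H) H &
       connected_on (cross e A (H :\: A)) H] /\
   [/\ (forall y, y \in H1 -> (y \in A) = (y \in A1)),
       (forall z, z \in H1 -> #|comp_of e (side H A z) z| <= #|comp_of e (side H1 A1 z) z|) &
       (forall z, z \in H2 -> z != x -> #|comp_of e (side H A z) z| <= #|comp_of e (side H2 A2 z) z|)].
Proof.
move=> se hadj sA1 sH1 xH1 c1 cx1 sA2 sH2 xH2 c2 cx2 opp.
pose A2' := if (x \in A1) == (x \in A2) then A2 else H2 :\: A2.
have sA2' : A2' \subset H2 by rewrite /A2'; case: ifP => // _; apply: subsetDl.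
have cx2' : connected_on (cross e A2' (H2 :\: A2')) H2.
  by rewrite /A2'; case: ifP => // _; apply: cconn_swap.
have al : (x \in A1) = (x \in A2').
  rewrite /A2'; case: eqP => // /eqP ne; rewrite !inE xH2 andbT.
  by move: ne; case: (x \in A1); case: (x \in A2).
have opp' v : v \in H2 -> e x v -> (v \in A2') != (x \in A2').
  move=> vH2 exv; have := opp _ vH2 exv; rewrite /A2'; case: ifP => // _.
  by rewrite !inE vH2 xH2 !andbT; case: (v \in A2); case: (x \in A2).
have sd z : z \in H2 -> side H2 A2' z = side H2 A2 z.
  by move=> zH2; rewrite /A2'; case: ifP => // _; apply: side_swap.
have hI y : y \in H1 -> y \in H2 -> y = x.
  move=> /(subsetP sH1) yUL /(subsetP sH2); rewrite in_setU1 => /orP[/eqP //|yL].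
  by move: yUL; rewrite inE yL.
have hE u v : u \in H1 -> v \in H2 -> u != x -> v != x -> ~~ e u v.
  move=> uH1 vH2 ux vx; have := subsetP sH2 _ vH2; rewrite in_setU1 (negbTE vx) /= => vL.
  have := subsetP sH1 _ uH1; rewrite inE => /andP[uL uU]; apply/negP => euv.
  by move: uL; rewrite (hadj _ _ uU ux vL euv).
have [[sAH m1 m2 gc gx] [gc1 gc2]] := glue se sA1 sA2' xH1 xH2 hI hE al opp'.
exists (H1 :|: H2), (A1 :|: A2'); split; [split=> //; [exact: gc | exact: gx] |split=> //].
- by move=> y yH1; apply: subset_leq_card; apply: gc1.
- move=> y yH2 yx; rewrite -(sd _ yH2); apply: subset_leq_card; exact: gc2.
Qed.

Lemma root_comp_notin (T : finType) (e : rel T) (V A : {set T}) r z :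
  symmetric e -> A \subset V -> (forall y, y \in V -> e r y -> (y \in A) != (r \in A)) ->
  z != r -> r \notin comp_of e (side V A z) z.
Proof.
move=> se sAV opp zr; apply/negP; rewrite inE => /andP[rX czr].
have crz : connect (induced e (side V A z)) r z.
  by rewrite (sym_connect_sym (induced_sym _ se)).
have rQ : r \in [set r] by rewrite inE.
have zQ : z \notin [set r] by rewrite inE.
have [q [q' [qQ q'Q /and3P[qX q'X eqq']]]] := exit_edge crz rQ zQ.
move: qQ; rewrite inE => /eqP qr; subst q.
have q'V := subsetP (side_sub z sAV) _ q'X.
by move: (opp _ q'V eqq'); rewrite (side_in sAV qX q'X) eqxx.
Qed.

Lemma root_part (T : finType) (e : rel T) : symmetric e -> irreflexive e ->
  forall n (V : {set T}) r (w : T -> nat), #|V| <= n -> connected_on (induced e V) V -> r \in V ->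
  exists H A : {set T},
   [/\ A \subset H, H \subset V, r \in H, connected_on (induced e H) H &
       connected_on (cross e A (H :\: A)) H] /\
   [/\ (forall z, z \in V -> 0 < w z -> z \in H),
       (forall y, y \in H -> e r y -> (y \in A) != (r \in A)) &
       (forall z, z \in H -> z != r -> #|comp_of e (side H A z) z| <= \sum_(y in V :\ r) w y)].
Proof.
move=> se ie; elim=> [|n IH] V r w hV cV rV.
  by move: hV; rewrite leqn0 => /eqP/cards0_eq V0; rewrite V0 inE in rV.
case: (boolP [exists y, [&& y \in V, y != r, w y == 0 &
   [forall a, forall b, (a \in V :\ y) ==> (b \in V :\ y) ==> connect (induced e (V :\ y)) a b]]]).
  move=> /existsP[y /and4P[yV yr /eqP wy /forallP cVy]].
  have cV' : connected_on (induced e (V :\ y)) (V :\ y).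
    by move=> a b aV bV; move: (cVy a) => /forallP /(_ b); rewrite aV bV.
  have hV' : #|V :\ y| <= n by move: hV; rewrite (cardsD1 y V) yV add1n ltnS.
  have rV' : r \in V :\ y by rewrite !inE eq_sym yr rV.
  have [H [A [[sAH sHV rH cH cxH] [pos opp bnd]]]] := IH _ r w hV' cV' rV'.
  exists H, A; split; split=> //.
  - by apply: subset_trans sHV (subsetDl _ _).
  - move=> z zV wz; apply: pos => //; rewrite !inE zV andbT.
    by apply/eqP => zy; move: wz; rewrite zy wy.
  - move=> z zH zr; apply: leq_trans (bnd _ zH zr) _; apply: sum_sub.
    by apply/subsetP => t; rewrite !inE => /andP[-> /andP[_ ->]].
move=> /existsPn noA.
case: (boolP [exists x, exists z, [&& x \in V, x != r, z \in V :\ x &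
   ~~ connect (induced e (V :\ x)) z r]]).
  move=> /existsP[x /existsP[z /and4P[xV xr zVx nzr]]].
  have [sL zL cVL cxL] := compL_facts se cV xV zVx.
  set L := comp_of e (V :\ x) z in sL zL cVL cxL.
  have rL : r \notin L by rewrite inE negb_and nzr orbT.
  have xL : x \notin L by apply/negP => /(subsetP sL); rewrite !inE eqxx.
  have rVL : r \in V :\: L by rewrite inE rL rV.
  have xVL : x \in V :\: L by rewrite inE xL xV.
  have zV : z \in V by move: zVx; rewrite !inE => /andP[].
  have hadj u l : u \in V -> u != x -> l \in L -> e u l -> u \in L.
    by move=> uV ux lL eul; apply: compL_adj se uV ux lL eul.
  have LV : L \subset V by apply: subset_trans sL (subsetDl _ _).
  have LVr : L \subset V :\ r.
    apply/subsetP => t tL; rewrite !inE (subsetP LV _ tL) andbT.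
    by apply/eqP => tr; move: rL; rewrite -tr tL.
  have hVL : #|V :\: L| <= n.
    rewrite -ltnS; apply: leq_trans hV; apply: proper_card; apply/properP.
    by split; [apply: subsetDl | exists z => //; rewrite inE zL].
  have hxL : #|x |: L| <= n.
    rewrite -ltnS; apply: leq_trans hV; apply: proper_card; apply/properP; split.
      by apply/subsetP => t; rewrite in_setU1 => /orP[/eqP->//|/(subsetP LV)].
    by exists r => //; rewrite in_setU1 negb_or eq_sym xr.
  case: (eqVneq (\sum_(t in L) w t) 0) => [wL0|wLn0].
    have [H [A [[sAH sHV rH cH cxH] [pos opp bnd]]]] := IH _ r w hVL cVL rVL.
    exists H, A; split; split=> //.
    + by apply: subset_trans sHV (subsetDl _ _).
    + move=> t tV wt; apply: pos => //; rewrite inE tV andbT.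
      apply/negP => tL; move: wL0 => /eqP; rewrite sum_nat_eq0 => /forallP /(_ t).
      by move=> /implyP /(_ tL) /eqP wt0; rewrite wt0 in wt.
    + move=> t tH tr; apply: leq_trans (bnd _ tH tr) _; apply: sum_sub.
      by apply/subsetP => u; rewrite !inE => /andP[-> /andP[_ ->]].
  pose w' y := w y + (if y == x then \sum_(t in L) w t else 0).
  have [H1 [A1 [[sA1 sH1 rH1 c1 cx1] [pos1 opp1 bnd1]]]] := IH _ r w' hVL cVL rVL.
  have xxL : x \in x |: L by rewrite in_setU1 eqxx.
  have [H2 [A2 [[sA2 sH2 xH2 c2 cx2] [pos2 opp2 bnd2]]]] := IH _ x w hxL cxL xxL.
  have xH1 : x \in H1.
    by apply: pos1 => //; rewrite /w' eqxx; apply: leq_trans (leq_addl _ _); rewrite lt0n.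
  have [H [A [[sAH HE cH cxH] [m1 b1 b2]]]] :=
    contract_step se hadj sA1 sH1 xH1 c1 cx1 sA2 sH2 xH2 c2 cx2 opp2.
  exists H, A; split; split=> //.
  - rewrite HE; apply/subsetP => t; rewrite inE => /orP[/(subsetP sH1)|/(subsetP sH2)].
      by rewrite inE => /andP[].
    by rewrite in_setU1 => /orP[/eqP->//|/(subsetP LV)].
  - by rewrite HE inE rH1.
  - move=> t tV wt; rewrite HE inE; case tL: (t \in L).
      by rewrite pos2 ?orbT // in_setU1 tL orbT.
    rewrite pos1 //; first by rewrite in_setD tL tV.
    rewrite /w'; exact: leq_trans wt (leq_addr _ _).
  - move=> y; rewrite HE inE => /orP[yH1|yH2] ery.
      by rewrite (m1 _ yH1) (m1 _ rH1) opp1.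
    move: (subsetP sH2 _ yH2); rewrite in_setU1 => /orP[/eqP yx|yL].
      by rewrite yx (m1 _ xH1) (m1 _ rH1) opp1 // -yx.
    have rx : r != x by rewrite eq_sym.
    by move: rL; rewrite (hadj _ _ rV rx yL ery).
  - move=> t tH tr; rewrite HE inE in tH.
    case tH1: (t \in H1).
      apply: leq_trans (b1 _ tH1) _; apply: leq_trans (bnd1 _ tH1 tr) _.
      rewrite (_ : (V :\: L) :\ r = (V :\ r) :\: L); last first.
        by apply/setP => u; rewrite !(in_setD, in_setD1); case: (u \in L); case: (u \in [set r]).
      rewrite (sum_contract w LVr) //; by rewrite !(in_setD, in_setD1) xL !inE xr xV.
    have tH2 : t \in H2 by move: tH; rewrite tH1.
    have tx : t != x by apply/eqP => tx; rewrite tx xH1 in tH1.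
    apply: leq_trans (b2 _ tH2 tx) _; apply: leq_trans (bnd2 _ tH2 tx) _.
    rewrite (_ : (x |: L) :\ x = L); first exact: sum_sub.
    apply/setP => u; rewrite in_setD1 in_setU1; case: eqP => [->|//].
    by rewrite (negbTE xL).
move=> /existsPn noB.
have wpos y : y \in V -> y != r -> 0 < w y.
  move=> yV yr; rewrite lt0n; apply/negP => /eqP wy.
  move: (noA y); rewrite yV yr wy eqxx /=; apply/negP/negPn.
  apply/forallP => a; apply/forallP => b; apply/implyP => aV; apply/implyP => bV.
  have ar : forall c, c \in V :\ y -> connect (induced e (V :\ y)) c r.
    move=> c cVy; move: (noB y) => /existsPn /(_ c).
    by rewrite yV yr cVy /= negbK.
  apply: (@connect_trans _ _ r); first exact: ar.
  by rewrite (sym_connect_sym (induced_sym _ se)); apply: ar.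
have [A [sAV cxV opp]] := exists_rootpart se ie cV rV.
exists V, A; split; split=> //.
move=> z zV zr.
have sub : comp_of e (side V A z) z \subset V :\ r.
  apply/subsetP => t tc; rewrite !inE (subsetP (side_sub z sAV) _ (subsetP (comp_sub _ _ _) _ tc)).
  rewrite andbT; apply/eqP => tr; move: tc; rewrite tr; apply/negP.
  exact: root_comp_notin se sAV opp zr.
apply: leq_trans (subset_leq_card sub) _.
rewrite -sum1_card; apply: leq_sum => t; rewrite !inE => /andP[tr tV]; exact: wpos.
Qed.

Lemma arith3 a b W : a + b <= W -> a.*2 <= W \/ b.*2 <= W.
Proof. rewrite -!mul2n; lia. Qed.

Lemma half_up W a : a.*2 <= W -> a <= uphalf W.
Proof. rewrite uphalf_half -mul2n => h; have := odd_double_half W; rewrite -mul2n; lia. Qed.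

Lemma main_part (T : finType) (e : rel T) : symmetric e -> irreflexive e ->
  forall n (U : {set T}) (w : T -> nat), #|U| <= n -> connected_on (induced e U) U ->
  0 < \sum_(y in U) w y ->
  exists H A : {set T},
   [/\ A \subset H, H \subset U, connected_on (induced e H) H &
       connected_on (cross e A (H :\: A)) H] /\
   [/\ (forall z, z \in U -> 0 < w z -> z \in H) &
       (forall z, z \in H -> #|comp_of e (side H A z) z| <= uphalf (\sum_(y in U) w y))].
Proof.
move=> se ie; elim=> [|n IH] U w hU cU W0.
  move: hU; rewrite leqn0 => /eqP/cards0_eq U0; move: W0; rewrite U0.
  by rewrite big_set0.
set W := \sum_(y in U) w y in W0 *.
case: (boolP [exists y, [&& y \in U, w y == 0 &
   [forall a, forall b, (a \in U :\ y) ==> (b \in U :\ y) ==> connect (induced e (U :\ y)) a b]]]).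
  move=> /existsP[y /and3P[yU /eqP wy /forallP cUy]].
  have cU' : connected_on (induced e (U :\ y)) (U :\ y).
    by move=> a b aU bU; move: (cUy a) => /forallP /(_ b); rewrite aU bU.
  have hU' : #|U :\ y| <= n by move: hU; rewrite (cardsD1 y U) yU add1n ltnS.
  have WE : \sum_(t in U :\ y) w t = W by rewrite /W (big_setD1 y yU) /= wy.
  have W0' : 0 < \sum_(t in U :\ y) w t by rewrite WE.
  have [H [A [[sAH sHU cH cxH] [pos bnd]]]] := IH _ w hU' cU' W0'.
  exists H, A; split; split=> //.
  - by apply: subset_trans sHU (subsetDl _ _).
  - move=> z zU wz; apply: pos => //; rewrite !inE zU andbT.
    by apply/eqP => zy; move: wz; rewrite zy wy.
  - by move=> z zH; rewrite -WE; apply: bnd.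
move=> /existsPn noA.
case: (boolP [exists x, exists z, exists z', [&& x \in U, z \in U :\ x, z' \in U :\ x &
   ~~ connect (induced e (U :\ x)) z z']]).
  move=> /existsP[x /existsP[z1 /existsP[z2 /and4P[xU z1U z2U nz12]]]].
  have cs : connect_sym (induced e (U :\ x)) by apply: sym_connect_sym; apply: induced_sym.
  have [z [z' [zU z'U nzz' hz]]] : exists z z', [/\ z \in U :\ x, z' \in U :\ x,
      ~~ connect (induced e (U :\ x)) z z' &
      (\sum_(t in comp_of e (U :\ x) z) w t).*2 <= W].
    set L1 := comp_of e (U :\ x) z1; set L2 := comp_of e (U :\ x) z2.
    have dis t : t \in L2 -> (t \in L1) = false.
      move=> tL2; apply/negP => tL1; move: tL1 tL2; rewrite !inE => /andP[_ c1t] /andP[_ c2t].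
      move: nz12; rewrite (connect_trans c1t) //; by rewrite cs.
    have sub : L1 :|: L2 \subset U.
      apply/subsetP => t; rewrite inE => /orP[] /(subsetP (comp_sub _ _ _)); rewrite !inE => /andP[].
        by [].
      by [].
    have : \sum_(t in L1) w t + \sum_(t in L2) w t <= W.
      apply: leq_trans (sum_sub w sub); rewrite [X in _ <= X](big_setID L1) /=.
      rewrite (_ : (L1 :|: L2) :&: L1 = L1); last by apply/setIidPr; apply: subsetUl.
      rewrite (_ : (L1 :|: L2) :\: L1 = L2) //.
      apply/setP => t; rewrite in_setD in_setU; case t2: (t \in L2).
        by rewrite (dis _ t2).
      by case: (t \in L1).
    case/arith3 => h.
      by exists z1, z2; split.
    by exists z2, z1; split=> //; rewrite cs.
  have [sL zL cUL cxL] := compL_facts se cU xU zU.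
  set L := comp_of e (U :\ x) z in sL zL cUL cxL hz.
  have xL : x \notin L by apply/negP => /(subsetP sL); rewrite !inE eqxx.
  have z'L : z' \notin L by rewrite inE negb_and nzz' orbT.
  have xUL : x \in U :\: L by rewrite inE xL xU.
  have zUU : z \in U by move: zU; rewrite !inE => /andP[].
  have z'UU : z' \in U by move: z'U; rewrite !inE => /andP[].
  have z'x : z' != x by move: z'U; rewrite !inE => /andP[].
  have hadj u l : u \in U -> u != x -> l \in L -> e u l -> u \in L.
    by move=> uU ux lL eul; apply: compL_adj se uU ux lL eul.
  have LU : L \subset U by apply: subset_trans sL (subsetDl _ _).
  have hUL : #|U :\: L| <= n.
    rewrite -ltnS; apply: leq_trans hU; apply: proper_card; apply/properP.
    by split; [apply: subsetDl | exists z => //; rewrite inE zL].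
  have hxL : #|x |: L| <= n.
    rewrite -ltnS; apply: leq_trans hU; apply: proper_card; apply/properP; split.
      by apply/subsetP => t; rewrite in_setU1 => /orP[/eqP->//|/(subsetP LU)].
    by exists z' => //; rewrite in_setU1 negb_or z'x z'L.
  have WLsplit : \sum_(t in U) w t = \sum_(t in L) w t + \sum_(t in U :\: L) w t.
    by rewrite (big_setID L) /= (setIidPr LU).
  case: (eqVneq (\sum_(t in L) w t) 0) => [wL0|wLn0].
    have WE : \sum_(t in U :\: L) w t = W by rewrite /W WLsplit wL0.
    have W0' : 0 < \sum_(t in U :\: L) w t by rewrite WE.
    have [H [A [[sAH sHU cH cxH] [pos bnd]]]] := IH _ w hUL cUL W0'.
    exists H, A; split; split=> //.
    + by apply: subset_trans sHU (subsetDl _ _).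
    + move=> t tU wt; apply: pos => //; rewrite inE tU andbT.
      apply/negP => tL; move: wL0 => /eqP; rewrite sum_nat_eq0 => /forallP /(_ t).
      by move=> /implyP /(_ tL) /eqP wt0; rewrite wt0 in wt.
    + by move=> t tH; rewrite -WE; apply: bnd.
  pose w' y := w y + (if y == x then \sum_(t in L) w t else 0).
  have WE : \sum_(t in U :\: L) w' t = W by rewrite /w' sum_contract.
  have W0' : 0 < \sum_(t in U :\: L) w' t by rewrite WE.
  have [H1 [A1 [[sA1 sH1 c1 cx1] [pos1 bnd1]]]] := IH _ w' hUL cUL W0'.
  have xxL : x \in x |: L by rewrite in_setU1 eqxx.
  have [H2 [A2 [[sA2 sH2 xH2 c2 cx2] [pos2 opp2 bnd2]]]] := root_part se ie w hxL cxL xxL.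
  have xH1 : x \in H1.
    by apply: pos1 => //; rewrite /w' eqxx; apply: leq_trans (leq_addl _ _); rewrite lt0n.
  have [H [A [[sAH HE cH cxH] [m1 b1 b2]]]] :=
    contract_step se hadj sA1 sH1 xH1 c1 cx1 sA2 sH2 xH2 c2 cx2 opp2.
  exists H, A; split; split=> //.
  - rewrite HE; apply/subsetP => t; rewrite inE => /orP[/(subsetP sH1)|/(subsetP sH2)].
      by rewrite inE => /andP[].
    by rewrite in_setU1 => /orP[/eqP->//|/(subsetP LU)].
  - move=> t tU wt; rewrite HE inE; case tL: (t \in L).
      by rewrite pos2 ?orbT // in_setU1 tL orbT.
    rewrite pos1 //; first by rewrite in_setD tL tU.
    rewrite /w'; exact: leq_trans wt (leq_addr _ _).
  - move=> t tH; rewrite HE inE in tH.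
    case tH1: (t \in H1).
      apply: leq_trans (b1 _ tH1) _; rewrite -WE; exact: bnd1.
    have tH2 : t \in H2 by move: tH; rewrite tH1.
    have tx : t != x by apply/eqP => tx; rewrite tx xH1 in tH1.
    apply: leq_trans (b2 _ tH2 tx) _; apply: leq_trans (bnd2 _ tH2 tx) _.
    rewrite (_ : (x |: L) :\ x = L); first exact: half_up.
    apply/setP => u; rewrite in_setD1 in_setU1; case: eqP => [->|//].
    by rewrite (negbTE xL).
move=> /existsPn noB.
have cUy y : y \in U -> connected_on (induced e (U :\ y)) (U :\ y).
  move=> yU a b ay bUy; move: (noB y) => /existsPn /(_ a) /existsPn /(_ b).
  by rewrite yU ay bUy /= negbK.
have wpos y : y \in U -> 0 < w y.
  move=> yU; rewrite lt0n; apply/negP => /eqP wy.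
  move: (noA y); rewrite yU wy eqxx /=; apply/negP/negPn.
  apply/forallP => a; apply/forallP => b; apply/implyP => aU; apply/implyP => bU.
  exact: cUy.
have [r rU] : exists r, r \in U.
  case: (set_0Vmem U) => [U0|[r rU]]; last by exists r.
  by move: W0; rewrite /W U0 big_set0.
have [A [sAU cxU bnd]] := base_part se ie cU rU.
exists U, A; split; split=> //.
move=> z zU; apply: leq_trans (bnd _ zU) _; apply: uphalf_leq.
rewrite -sum1_card; apply: leq_sum => t tU; exact: wpos.
Qed.

Definition Pgood (T : finType) (e : rel T) (S H A : {set T}) k :=
  [/\ A \subset H, S \subset H, connected_on (induced e H) H,
      connected_on (cross e A (H :\: A)) H &
      forall z, z \in H -> #|comp_of e (side H A z) z| <= uphalf k].

Lemma Pgood_swap (T : finType) (e : rel T) (S H A : {set T}) k :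
  Pgood e S H A k -> Pgood e S H (H :\: A) k.
Proof.
move=> [sAH sSH cH cxH bnd]; split=> //.
- exact: subsetDl.
- exact: cconn_swap.
- by move=> z zH; rewrite side_swap //; apply: bnd.
Qed.

Lemma add_vertex (T : finType) (e : rel T) (S H A : {set T}) k v u :
  symmetric e -> 0 < k -> Pgood e S H A k -> v \notin H -> u \in H -> e v u ->
  (forall a, a \in A -> ~~ e v a) -> Pgood e S (v |: H) (v |: A) k.
Proof.
move=> se k0 [sAH sSH cH cxH bnd] vH uH evu noA.
have uA : u \notin A by apply/negP => /noA; rewrite evu.
have HD : (v |: H) :\: (v |: A) = H :\: A.
  apply/setP => t; rewrite !(in_setD, in_setU1); case: (eqVneq t v) => [->|tv].
    by rewrite (negbTE vH) andbF.
  by [].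
split.
- by apply: setUS.
- by apply: subset_trans sSH (subsetUr _ _).
- have reach y : y \in v |: H -> connect (induced e (v |: H)) u y.
    have mono : subrel (connect (induced e H)) (connect (induced e (v |: H))).
      by apply: connect_induced_mono => // t tH; rewrite in_setU1 tH orbT.
    rewrite in_setU1 => /orP[/eqP->|yH]; last by apply: mono; apply: cH.
    by apply: connect1; rewrite /induced /= !in_setU1 eqxx uH orbT /= se evu.
  move=> a b aH bH; apply: (@connect_trans _ _ u); last exact: reach.
  by rewrite (sym_connect_sym (induced_sym _ se)); apply: reach.
- rewrite HD.
  have mono : subrel (cross e A (H :\: A)) (cross e (v |: A) (H :\: A)).
    move=> x y /andP[exy h]; rewrite /cross /= exy /= !in_setU1.
    by case/orP: h => /andP[-> ->]; rewrite ?orbT.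
  have reach y : y \in v |: H -> connect (cross e (v |: A) (H :\: A)) u y.
    rewrite in_setU1 => /orP[/eqP->|yH].
      apply: connect1; rewrite /cross /= se evu !in_setU1 eqxx !inE uA uH.
      by rewrite orbT.
    by apply: connect_sub (fun a b h => connect1 (mono a b h)) _ _ (cxH _ _ uH yH).
  move=> a b aH bH; apply: (@connect_trans _ _ u); last exact: reach.
  by rewrite (sym_connect_sym (cross_sym _ _ se)); apply: reach.
- move=> z; rewrite in_setU1 => /orP[/eqP->|zH].
    rewrite /side in_setU1 eqxx /=.
    have sub : comp_of e (v |: A) v \subset [set v].
      apply/subsetP => t; rewrite in_set1 /comp_of inE => /andP[tA cvt].
      have vQ : v \in [set v] by rewrite inE.
      apply/negPn/negP => tv.
      have tQ : t \notin [set v] by rewrite in_set1.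
      have [q [q' [qQ q'Q /and3P[_ q'A eqq']]]] := exit_edge cvt vQ tQ.
      move: qQ; rewrite inE => /eqP qv; subst q.
      move: q'A; rewrite in_setU1; move: q'Q; rewrite inE => /negbTE ->.
      by move=> /= /noA; rewrite eqq'.
    apply: leq_trans (subset_leq_card sub) _; by rewrite cards1 uphalf_gt0.
  have zv : z != v by apply/eqP => zv; move: vH; rewrite -zv zH.
  case zA: (z \in A).
    have : #|comp_of e (side H A z) z| <= uphalf k by apply: bnd.
    rewrite /side in_setU1 zA orbT => h; apply: leq_trans h.
    apply: subset_leq_card; apply: comp_restrict zA _ _ => //.
    move=> a t aA _; rewrite in_setU1 => /orP[/eqP->|//].
    by rewrite se => eva; move: (noA _ aA); rewrite eva.
  have : #|comp_of e (side H A z) z| <= uphalf k by apply: bnd.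
  by rewrite /side in_setU1 (negbTE zv) zA /= HD.
Qed.

Definition CLosed (T : finType) (e : rel T) (H A : {set T}) :=
  forall v, v \notin H -> (exists2 u, u \in H & e v u) ->
  (exists2 a, a \in A & e v a) /\ (exists2 b, b \in H :\: A & e v b).

Lemma closure_step (T : finType) (e : rel T) (S H A : {set T}) k :
  symmetric e -> 0 < k -> Pgood e S H A k ->
  CLosed e H A \/ exists H' A' : {set T}, Pgood e S H' A' k /\ #|H| < #|H'|.
Proof.
move=> se k1 gd.
case: (boolP [exists v, [&& v \notin H, [exists u, (u \in H) && e v u] &
      ~~ ([exists a, (a \in A) && e v a] && [exists b, (b \in H :\: A) && e v b])]]).
  move=> /existsP[v /and3P[vH /existsP[u /andP[uH evu]] nab]]; right.
  have lt : #|H| < #|v |: H| by rewrite cardsU1 vH.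
  move: nab; rewrite negb_and => /orP[noa|nob].
    exists (v |: H), (v |: A); split=> //; apply: add_vertex se k1 gd vH uH evu _.
    by move=> a aA; apply/negP => eva; move: noa => /existsP; apply; exists a; rewrite aA eva.
  exists (v |: H), (v |: (H :\: A)); split=> //.
  apply: add_vertex se k1 (Pgood_swap gd) vH uH evu _.
  by move=> b bB; apply/negP => evb; move: nob => /existsP; apply; exists b; rewrite bB evb.
move=> /existsPn nov; left => v vH [u uH evu].
move: (nov v); rewrite vH /=; case: existsP => [_|[]]; last by exists u; rewrite uH.
rewrite /= negbK => /andP[/existsP[a /andP[aA eva]] /existsP[b /andP[bB evb]]].
by split; [exists a | exists b].
Qed.

Theorem lemma2 (T : finType) (e : rel T) (S : {set T}) (k : nat) :
  simple_graph e -> graph_connected e ->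
  #|S| = k -> 1 <= k ->
  exists H A B : {set T},
    [/\ S \subset H, connected_on (induced e H) H,
        H = A :|: B & [disjoint A & B]] /\
    [/\ (forall a, a \in A -> #|comp_of e A a| <= uphalf k),
        (forall b, b \in B -> #|comp_of e B b| <= uphalf k),
        connected_on (cross e A B) H &
        forall v, v \notin H -> (exists2 u, u \in H & e v u) ->
          (exists2 a, a \in A & e v a) /\ (exists2 b, b \in B & e v b)].
Proof.
move=> [se ie] cG Sk k1.
pose w (y : T) : nat := y \in S.
have Wk : \sum_(y in [set: T]) w y = k.
  rewrite -Sk -sum1_card (big_setID S) /= setTI.
  rewrite [X in _ + X]big1 ?addn0; last by move=> y; rewrite !inE /w => /andP[/negbTE ->].
  by apply: eq_bigr => y yS; rewrite /w yS.
have cT : connected_on (induced e [set: T]) [set: T].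
  move=> x y _ _; rewrite (@eq_connect _ _ e) ?cG ?inE //.
  by move=> a b; rewrite /induced /= !inE.
have W0 : 0 < \sum_(y in [set: T]) w y by rewrite Wk.
have [H0 [A0 [[sA0 _ cH0 cx0] [pos0 bnd0]]]] := main_part se ie (leqnn _) cT W0.
rewrite Wk in bnd0.
have good0 : Pgood e S H0 A0 k.
  split=> //; apply/subsetP => y yS; apply: pos0; first by rewrite inE.
  by rewrite /w yS.
have main : forall n (H A : {set T}), #|T| - #|H| <= n -> Pgood e S H A k ->
    exists H A : {set T}, Pgood e S H A k /\ CLosed e H A.
  elim=> [|n IH] H A hn gd.
    case: (closure_step se k1 gd) => [cl|[H' [A' [_ lt]]]]; first by exists H, A.
    have le : #|H'| <= #|T| by apply: max_card.
    by move: hn; rewrite leqn0 subn_eq0 => /(leq_trans le); rewrite leqNgt lt.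
  case: (closure_step se k1 gd) => [cl|[H' [A' [gd' lt]]]]; first by exists H, A.
  have le : #|H'| <= #|T| by apply: max_card.
  apply: (IH H' A') => //; move: hn lt le; clear; lia.
have [H [A [[sAH sSH cH cxH bnd] cl]]] := main _ H0 A0 (leqnn _) good0.
exists H, A, (H :\: A); split; split=> //.
- apply/setP => t; rewrite in_setU in_setD; case tA: (t \in A) => //=.
  by rewrite (subsetP sAH _ tA).
- rewrite -setI_eq0; apply/eqP/setP => t; rewrite !inE.
  by case: (t \in A); rewrite ?andbF.
- move=> a aA; have := bnd _ (subsetP sAH _ aA); by rewrite /side aA.
- move=> b bB; have bH : b \in H by move: bB; rewrite inE => /andP[].
  have := bnd _ bH; rewrite /side; move: bB; rewrite inE => /andP[/negbTE -> _].
  by [].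
Qed.
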